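(* Let $\varphi\colon \mathbb{R}^n\to\overline{\mathbb{R}}$ be a proper nearly convex function and $\varepsilon\geq 0$. Then for every $\bar x\in \mathrm{ri}(\mathrm{dom}\, \varphi)$, the set $\partial_\varepsilon \varphi(\bar x)$ is nonempty, closed and convex. Furthermore, $$\partial \varphi(\bar x)=\bigcap_{\varepsilon>0} \partial_\varepsilon \varphi(\bar x).$$
   Context: $\overline{\mathbb{R}}=[-\infty,\infty]$; $\varphi$ is proper if $\mathrm{dom}\,\varphi=\{x\mid\varphi(x)<\infty\}\ne\emptyset$ and $\varphi(x)>-\infty$ for all $x$. A set $D$ is nearly convex if there is a convex set $E$ with $E\subset D\subset\overline{E}$; $\varphi$ is nearly convex if $\mathrm{epi}\,\varphi=\{(x,\alpha)\in\mathbb{R}^n\times\mathbb{R}\mid\alpha\ge\varphi(x)\}$ is nearly convex. The relative interior is $\mathrm{ri}\,D=\{a\in D\mid \exists\delta>0,\ B(a;\delta)\cap\mathrm{aff}\,D\subset D\}$. For $\varepsilon\ge0$ and $\bar x\in\mathrm{dom}\,\varphi$, $\partial_\varepsilon\varphi(\bar x)=\{\xi\in\mathbb{R}^n\mid \langle\xi,x-\bar x\rangle-\varepsilon\le\varphi(x)-\varphi(\bar x)\ \forall x\in\mathbb{R}^n\}$, and $\partial\varphi(\bar x)=\partial_0\varphi(\bar x)$. *)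

(* Defs.v *)
From HB Require Import structures.
From mathcomp Require Import all_boot all_order all_algebra.
From mathcomp Require Import all_classical all_reals all_analysis.
Set Implicit Arguments. Unset Strict Implicit. Unset Printing Implicit Defensive.
Import Order.TTheory GRing.Theory Num.Theory.
Import numFieldNormedType.Exports.
Local Open Scope classical_set_scope.
Local Open Scope ring_scope.

Section Defs.
Variables (R : realType) (n : nat).

Definition dotv (u v : 'rV[R]_n) : R := \sum_(i < n) u ord0 i * v ord0 i.

Definition enorm (u : 'rV[R]_n) : R := Num.sqrt (dotv u u).
Definition eball (a : 'rV[R]_n) (delta : R) : set 'rV[R]_n :=
  [set x | enorm (x - a) < delta].

Definition aff (D : set 'rV[R]_n) : set 'rV[R]_n :=
  [set x | exists (k : nat) (c : 'I_k -> R) (p : 'I_k -> 'rV[R]_n),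
     (forall i, D (p i)) /\ \sum_(i < k) c i = 1 /\ x = \sum_(i < k) c i *: p i].

Definition ri (D : set 'rV[R]_n) : set 'rV[R]_n :=
  [set a | D a /\ exists delta : R, 0 < delta /\ (eball a delta `&` aff D `<=` D)].

Definition dom (phi : 'rV[R]_n -> \bar R) : set 'rV[R]_n :=
  [set x | (phi x < +oo)%E].
Definition proper_fun (phi : 'rV[R]_n -> \bar R) : Prop :=
  dom phi !=set0 /\ forall x, (-oo < phi x)%E.
Definition epi (phi : 'rV[R]_n -> \bar R) : set ('rV[R]_n * R) :=
  [set p | (phi p.1 <= (p.2)%:E)%E].

Definition nearly_convex_set (D : set ('rV[R]_n * R)) : Prop :=
  exists E : set ('rV[R]_n * R), convex_set E /\ E `<=` D /\ D `<=` closure E.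
Definition nearly_convex_fun (phi : 'rV[R]_n -> \bar R) : Prop :=
  nearly_convex_set (epi phi).

(* epsilon-subdifferential and subdifferential (meaningful for xbar in dom phi) *)
Definition esubdiff (phi : 'rV[R]_n -> \bar R) (eps : R) (xbar : 'rV[R]_n)
  : set 'rV[R]_n :=
  [set xi | forall x : 'rV[R]_n,
     ((dotv xi (x - xbar) - eps)%:E <= phi x - phi xbar)%E].
Definition subdiff (phi : 'rV[R]_n -> \bar R) (xbar : 'rV[R]_n) : set 'rV[R]_n :=
  esubdiff phi 0 xbar.

End Defs.

(* Main.v *)
Require Import Defs.
From HB Require Import structures.
From mathcomp Require Import all_boot all_order all_algebra.
From mathcomp Require Import all_classical all_reals all_analysis.
From mathcomp Require Import zify ring lra.
Import Order.TTheory GRing.Theory Num.Theory.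
Import numFieldNormedType.Exports.
Local Open Scope classical_set_scope.
Local Open Scope ring_scope.
Set Implicit Arguments. Unset Strict Implicit.
Local Open Scope convex_scope.
Lemma orthant (R : realType) m n (C : set 'rV[R]_n) (t : 'rV[R]_n) (U : 'M[R]_(m,n)) :
  (forall a b (th : R), C a -> C b -> 0 <= th -> th <= 1 -> C (th *: a + (1 - th) *: b)) ->
  (forall sg : 'I_m -> bool, exists a : 'rV[R]_m,
      (forall i, if sg i then 0 <= a ord0 i else a ord0 i <= 0) /\ C (t + a *m U)) ->
  C t.
Proof.
move=> cvx H.
have Q : forall k, (k <= m)%N -> forall sg : 'I_m -> bool, exists a : 'rV[R]_m,
   (forall i : 'I_m, (i < m - k)%N -> if sg i then 0 <= a ord0 i else a ord0 i <= 0) /\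
   (forall i : 'I_m, (m - k <= i)%N -> a ord0 i = 0) /\ C (t + a *m U).
  elim=> [_ sg|k IH km sg].
    have [a [h1 h2]] := H sg; exists a; split => [i _|]; first exact: h1.
    split => // i; by rewrite subn0 leqNgt ltn_ord.
  have jlt : (m - k.+1 < m)%N by lia.
  pose j := Ordinal jlt.
  have [ap [hp1 [hp2 hp3]]] := IH (ltnW km) (fun i => if i == j then true else sg i).
  have [am [hm1 [hm2 hm3]]] := IH (ltnW km) (fun i => if i == j then false else sg i).
  have jk : (j < m - k)%N by rewrite /=; lia.
  have apj : 0 <= ap ord0 j by have := hp1 j jk; rewrite eqxx.
  have amj : am ord0 j <= 0 by have := hm1 j jk; rewrite eqxx.
  have [e0|ne] := eqVneq (ap ord0 j - am ord0 j) 0.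
    have apj0 : ap ord0 j = 0.
      apply/eqP; rewrite eq_le apj andbT; move/eqP: e0; rewrite subr_eq0 => /eqP ->; done.
    exists ap; split; last split => //.
      move=> i ik; have ik' : (i < m - k)%N by lia.
      have := hp1 i ik'; case: eqP => [->|//] _; rewrite apj0; by case: (sg j).
    move=> i ik; case: (eqVneq i j) => [->//|ij]; apply: hp2.
    have : (nat_of_ord i != nat_of_ord j) by [].
    rewrite /=; lia.
  have pos : 0 < ap ord0 j - am ord0 j.
    by rewrite lt_neqAle eq_sym ne /= subr_ge0 (le_trans amj apj).
  pose th := - am ord0 j / (ap ord0 j - am ord0 j).
  have th0 : 0 <= th by rewrite /th divr_ge0 // ?oppr_ge0 // ltW.
  have th1 : th <= 1 by rewrite /th ler_pdivrMr // mul1r; lra.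
  exists (th *: ap + (1 - th) *: am); split; last split.
  - move=> i ik; rewrite !mxE.
    have ik' : (i < m - k)%N by lia.
    have := hp1 i ik'; have := hm1 i ik'.
    have ij : i != j by apply/negP => /eqP ij; move: ik; rewrite ij /=; lia.
    rewrite (negbTE ij); case: (sg i) => h1 h2.
      nra.
    nra.
  - move=> i ik; rewrite !mxE.
    case: (eqVneq i j) => [->|ij].
      by rewrite /th; field.
    have ik' : (m - k <= i)%N.
      have : (nat_of_ord i != nat_of_ord j) by [].
      rewrite /=; lia.
    by rewrite hp2 // hm2 // !mulr0 addr0.
  - rewrite mulmxDl -!scalemxAl.
    have -> : t + (th *: (ap *m U) + (1 - th) *: (am *m U)) =
       th *: (t + ap *m U) + (1 - th) *: (t + am *m U).
      rewrite !scalerDr addrACA -scalerDl (_ : th + (1 - th) = 1) ?scale1r //.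
      by rewrite addrC subrK.
    exact: cvx.
have [a [_ [h2 h3]]] := Q m (leqnn m) (fun _ => true).
have a0 : a = 0 by apply/rowP => i; rewrite mxE h2 // subnn.
by rewrite a0 mul0mx addr0 in h3.
Qed.
Lemma span_exists (R : realType) n (S : set 'rV[R]_n) :
  exists m (U : 'M[R]_(m,n)), (forall i, S (row i U)) /\ (forall s, S s -> (s <= U)%MS).
Proof.
apply: contrapT => H.
have step : forall r, exists m (U : 'M[R]_(m,n)), (forall i, S (row i U)) /\ (r <= \rank U)%N.
  elim=> [|r [m [U [hU hr]]]]; first by exists 0%N, 0; split => // -[].
  have : ~ (forall s, S s -> (s <= U)%MS) by move=> hs; apply: H; exists m, U.
  move=> /existsNP [s /not_implyP [Ss /negP sU]].
  exists (m + 1)%N, (col_mx U s); split.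
    move=> i; rewrite -(splitK i); case: (fintype.split i) => j /=; first by rewrite rowKu.
    by rewrite rowKd row_id.
  have sub : (U <= col_mx U s)%MS by rewrite -addsmxE addsmxSl.
  apply: (leq_ltn_trans hr).
  rewrite (ltn_leqif (mxrank_leqif_sup sub)).
  apply/negP => hB; move/negP: sU; apply.
  have sB : (s <= col_mx U s)%MS by rewrite -addsmxE addsmxSr.
  exact: submx_trans sB hB.
have [m [U [_ hr]]] := step n.+1.
by move: (rank_leq_col U); rewrite leqNgt hr.
Qed.
Lemma aff_comb (R : realType) n m (D : set 'rV[R]_n) (xbar : 'rV[R]_n) (U : 'M[R]_(m,n)) (b : 'rV[R]_m) :
  D xbar -> (forall i, D (row i U + xbar)) -> aff D (xbar + b *m U).
Proof.
move=> Dx DU.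
exists m.+1, (fun i => match unlift ord0 i with Some j => b ord0 j | None => 1 - \sum_j b ord0 j end),
  (fun i => match unlift ord0 i with Some j => row j U + xbar | None => xbar end).
split; [|split].
- by move=> i; case: (unlift ord0 i).
- rewrite big_ord_recl unlift_none [X in _ + X](eq_bigr (fun j => b ord0 j)); last by move=> i _ /=; rewrite ?liftK.
  by rewrite subrK.
- rewrite big_ord_recl unlift_none [X in _ = _ + X](eq_bigr (fun j => b ord0 j *: (row j U + xbar))); last by move=> i _ /=; rewrite ?liftK.
  rewrite mulmx_sum_row.
  under [X in _ = _ + X]eq_bigr => i _ do rewrite scalerDr.
  rewrite big_split /= scalerBl scale1r -scaler_suml.
  by rewrite [RHS]addrA [RHS]addrAC subrK.
Qed.
Section Ext.
Variable R : realType.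

Lemma sum_bound k (a b : 'I_k -> R) (rho : R) :
  (forall i, `|a i| <= rho) -> `|\sum_i a i * b i| <= rho * \sum_i `|b i|.
Proof.
move=> h; apply: le_trans (ler_norm_sum _ _ _) _.
rewrite mulr_sumr; apply: ler_sum => i _.
by rewrite normrM ler_wpM2r.
Qed.

Lemma dotvC n (u v : 'rV[R]_n) : dotv u v = dotv v u.
Proof. by apply: eq_bigr => i _; rewrite mulrC. Qed.

Lemma dotvD n (u v w : 'rV[R]_n) : dotv u (v + w) = dotv u v + dotv u w.
Proof. by rewrite /dotv -big_split; apply: eq_bigr => i _; rewrite mxE mulrDr. Qed.

Lemma dotvZ n (u v : 'rV[R]_n) a : dotv u (a *: v) = a * dotv u v.
Proof. by rewrite /dotv mulr_sumr; apply: eq_bigr => i _; rewrite mxE mulrCA. Qed.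

Lemma dotvN n (u v : 'rV[R]_n) : dotv u (- v) = - dotv u v.
Proof. by rewrite -scaleN1r dotvZ mulN1r. Qed.

Lemma dotvB n (u v w : 'rV[R]_n) : dotv u (v - w) = dotv u v - dotv u w.
Proof. by rewrite dotvD dotvN. Qed.

Lemma dotv0l n (v : 'rV[R]_n) : dotv 0 v = 0.
Proof. by rewrite /dotv big1 // => i _; rewrite mxE mul0r. Qed.

Lemma dotv_bound n (u w : 'rV[R]_n) e :
  (forall j, `|w ord0 j| <= e) -> `|dotv u w| <= e * \sum_j `|u ord0 j|.
Proof. by move=> h; rewrite dotvC; apply: sum_bound. Qed.

Lemma enorm_le n (v : 'rV[R]_n) : enorm v <= \sum_j `|v ord0 j|.
Proof.
rewrite /enorm /dotv.
have [h1 h2] : \sum_(i < n) v ord0 i * v ord0 i <= (\sum_j `|v ord0 j|) ^+ 2 /\ 0 <= \sum_j `|v ord0 j|.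
  elim/big_rec2: _ => [|i x y _ [h1 h2]]; first by rewrite expr0n /=.
  split; last by rewrite addr_ge0.
  have : v ord0 i * v ord0 i = `|v ord0 i| ^+ 2 by rewrite real_normK ?num_real // expr2.
  move=> ->; have := normr_ge0 (v ord0 i); nra.
by rewrite -(ger0_norm h2) -sqrtr_sqr ler_wsqrtr.
Qed.

Lemma mx_bound k l (b : 'rV[R]_k) (M : 'M[R]_(k,l)) rho j :
  (forall i, `|b ord0 i| <= rho) -> `|(b *m M) ord0 j| <= rho * \sum_i `|M i j|.
Proof. by move=> h; rewrite mxE; apply: sum_bound. Qed.

Lemma le_sum_single k (f : 'I_k -> R) j : (forall i, 0 <= f i) -> f j <= \sum_i f i.
Proof. by move=> h; rewrite (bigD1 j) //= lerDl sumr_ge0. Qed.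

Lemma closure_approx n (E : set ('rV[R]_n * R)) (p : 'rV[R]_n * R) (e : R) :
  0 < e -> closure E p ->
  exists q, E q /\ (forall j, `|p.1 ord0 j - q.1 ord0 j| < e) /\ `|p.2 - q.2| < e.
Proof.
move=> e0 cp.
have := cp _ (nbhsx_ballx p e e0).
case=> q [Eq [b1 b2]].
exists q; split => //; split.
  move=> j. case: b1 => _ /(_ ord0 j). rewrite /ball /=. done.
by move: b2; rewrite /ball /=.
Qed.

Lemma closure_approx1 n (A : set 'rV[R]_n) (p : 'rV[R]_n) (e : R) :
  0 < e -> closure A p ->
  exists q, A q /\ (forall j, `|p ord0 j - q ord0 j| < e).
Proof.
move=> e0 cp.
have := cp _ (nbhsx_ballx p e e0).
case=> q [Eq [_ b1]].
exists q; split => // j; have := b1 ord0 j; rewrite /ball /=. done.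
Qed.

Lemma convB n (a b c : 'rV[R]_n) th :
  th *: a + (1 - th) *: b - c = th *: (a - c) + (1 - th) *: (b - c).
Proof.
rewrite !scalerBr addrACA -opprD -scalerDl (_ : th + (1 - th) = 1) ?scale1r //.
by rewrite addrC subrK.
Qed.

Lemma entry_conv k (u w : 'rV[R]_k) th t' i :
  (th *: u + t' *: w) ord0 i = th * u ord0 i + t' * w ord0 i.
Proof. by rewrite !mxE. Qed.

Lemma extension n (E : set ('rV[R]_n * R)) (xbar : 'rV[R]_n) (f0 : R) :
  (forall p q (th : R), E p -> E q -> 0 <= th -> th <= 1 -> E (th *: p + (1 - th) *: q)) ->
  (forall x a, E (x, a) -> x = xbar -> f0 <= a) ->
  (forall x a, E (x, a) -> exists lam, 0 < lam /\ exists a', E (xbar - lam *: (x - xbar), a')) ->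
  exists xi, forall x a, E (x, a) -> dotv xi (x - xbar) <= a - f0.
Proof.
move=> cvx base dom.
have Q : forall k, (k <= n)%N -> exists xi : 'rV[R]_n,
    (forall i : 'I_n, (k <= i)%N -> xi ord0 i = 0) /\
    forall x a, E (x, a) -> (forall i : 'I_n, (k <= i)%N -> (x - xbar) ord0 i = 0) ->
      dotv xi (x - xbar) <= a - f0.
  elim=> [_|k IH kn].
    exists 0; split => [i _|x a Ea hz]; first by rewrite mxE.
    rewrite dotv0l subr_ge0; apply: base Ea _.
    apply/rowP => i; have := hz i isT; rewrite !mxE => /eqP; rewrite subr_eq0 => /eqP //.
  have [xi [hxi0 hxi]] := IH (ltnW kn).
  pose kk : 'I_n := Ordinal kn.
  pose Z (x : 'rV[R]_n) := forall i : 'I_n, (k < i)%N -> (x - xbar) ord0 i = 0.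
  pose A x a := a - f0 - dotv xi (x - xbar).
  pose L := [set z | exists x a, E (x, a) /\ Z x /\ (x - xbar) ord0 kk < 0 /\
                     z = A x a / (x - xbar) ord0 kk].
  pose Us := [set z | exists x a, E (x, a) /\ Z x /\ 0 < (x - xbar) ord0 kk /\
                     z = A x a / (x - xbar) ord0 kk].
  have pair : forall l u, L l -> Us u -> l <= u.
    move=> l u [x1 [a1 [E1 [Z1 [s1n ->]]]]] [x2 [a2 [E2 [Z2 [s2p ->]]]]].
    set s1 := (x1 - xbar) ord0 kk in s1n *.
    set s2 := (x2 - xbar) ord0 kk in s2p *.
    have d0 : s2 - s1 != 0 by rewrite subr_eq0 gt_eqF // (lt_trans s1n s2p).
    pose th := s2 / (s2 - s1).
    have th0 : 0 <= th by rewrite /th divr_ge0 // ?subr_ge0 ltW // (lt_trans s1n s2p).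
    have th1 : th <= 1.
      by rewrite /th ler_pdivrMr ?subr_gt0 ?(lt_trans s1n s2p) // mul1r lerDl oppr_ge0 ltW.
    have Ep := cvx _ _ th E1 E2 th0 th1.
    have := hxi _ _ Ep.
    rewrite /= convB dotvD !dotvZ.
    move=> /(_ _) key.
    have {}key : th * dotv xi (x1 - xbar) + (1 - th) * dotv xi (x2 - xbar) <=
                 th * a1 + (1 - th) * a2 - f0.
      apply: key => i ki; rewrite entry_conv.
      have [ik|ik] := eqVneq i kk.
        rewrite ik -/s1 -/s2 /th; by field.
      have ki' : (k < i)%N.
        have : (nat_of_ord i != nat_of_ord kk) by [].
        rewrite /=; lia.
      by rewrite Z1 // Z2 // !mulr0 addr0.
    have s21 : 0 < s2 - s1 by rewrite subr_gt0 (lt_trans s1n s2p).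
    have key2 : 0 <= s2 * A x1 a1 - s1 * A x2 a2.
      have -> : s2 * A x1 a1 - s1 * A x2 a2 = (s2 - s1) * (th * a1 + (1 - th) * a2 - f0 -
          (th * dotv xi (x1 - xbar) + (1 - th) * dotv xi (x2 - xbar))).
        by rewrite /A /th; field.
      by apply: mulr_ge0; [exact: ltW | rewrite subr_ge0; exact: key].
    rewrite ler_pdivlMr // mulrAC ler_ndivrMr //.
    nra.
  have flip : forall x a, E (x, a) -> Z x -> exists x' a' lam, E (x', a') /\ Z x' /\ 0 < lam /\
      (x' - xbar) ord0 kk = - lam * (x - xbar) ord0 kk.
    move=> x a Ea Zx; have [lam [lam0 [a' Ea']]] := dom _ _ Ea.
    have ex : (xbar - lam *: (x - xbar)) - xbar = - lam *: (x - xbar).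
      by rewrite addrAC subrr add0r scaleNr.
    exists (xbar - lam *: (x - xbar)), a', lam; split => //; split; last split => //.
      by move=> i ki; rewrite ex mxE Zx // mulr0.
    by rewrite ex mxE.
  have LUs : L !=set0 -> Us !=set0.
    move=> [z [x [a [Ea [Zx [sn _]]]]]].
    have [x' [a' [lam [Ea' [Zx' [lam0 e]]]]]] := flip _ _ Ea Zx.
    exists (A x' a' / (x' - xbar) ord0 kk), x', a'; split => //; split => //; split => //.
    rewrite e; nra.
  have UsL : Us !=set0 -> L !=set0.
    move=> [z [x [a [Ea [Zx [sn _]]]]]].
    have [x' [a' [lam [Ea' [Zx' [lam0 e]]]]]] := flip _ _ Ea Zx.
    exists (A x' a' / (x' - xbar) ord0 kk), x', a'; split => //; split => //; split => //.
    rewrite e; nra.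
  have [c [hcL hcU]] : exists c, (forall l, L l -> l <= c) /\ (forall u, Us u -> c <= u).
    case: (pselect (L !=set0)) => hL.
      have [u0 Uu0] := LUs hL.
      have hub : has_ubound L by exists u0 => l Ll; exact: pair.
      exists (sup L); split; first by move=> l Ll; exact: ub_le_sup.
      move=> u Uu; apply: ge_sup => // l Ll; exact: pair.
    exists 0; split => [l Ll|u Uu]; first by exfalso; apply: hL; exists l.
    by exfalso; apply: hL; apply: UsL; exists u.
  pose xi' := \row_i (if i == kk then c else xi ord0 i).
  have hk0 : xi ord0 kk = 0 by apply: hxi0 => /=.
  have dxi : forall w, dotv xi' w = dotv xi w + c * w ord0 kk.
    move=> w; rewrite /dotv (bigD1 kk) //= [in RHS](bigD1 kk) //= !mxE eqxx hk0 mul0r add0r addrC.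
    by congr (_ + _); apply: eq_bigr => i ik; rewrite mxE (negbTE ik).
  exists xi'; split.
    move=> i ki; rewrite mxE.
    have ik : i != kk.
      apply/negP => /eqP ik; move: ki; rewrite ik /=; lia.
    rewrite (negbTE ik) hxi0 //; lia.
  move=> x a Ea hz.
  rewrite dxi.
  have Zx : Z x by move=> i ki; apply: hz.
  case: (ltgtP ((x - xbar) ord0 kk) 0) => hs.
  - have := hcL (A x a / (x - xbar) ord0 kk) (ex_intro _ x (ex_intro _ a (conj Ea (conj Zx (conj hs erefl))))).
    rewrite ler_ndivrMr // /A => h; lra.
  - have := hcU (A x a / (x - xbar) ord0 kk) (ex_intro _ x (ex_intro _ a (conj Ea (conj Zx (conj hs erefl))))).
    rewrite ler_pdivlMr // /A => h; lra.
  - rewrite hs mulr0 addr0; apply: (hxi _ _ Ea) => i ki.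
    case: (eqVneq i kk) => [->//|ik]; apply: hz.
    have : (nat_of_ord i != nat_of_ord kk) by [].
    rewrite /=; lia.
have [xi [_ hxi]] := Q n (leqnn n).
exists xi => x a Ea; apply: hxi Ea _ => i; by rewrite leqNgt ltn_ord.
Qed.
End Ext.
Lemma cvx_form (R : realType) n (E : set ('rV[R]_n * R)) : convex_set E ->
  forall p q (th : R), E p -> E q -> 0 <= th -> th <= 1 -> E (th *: p + (1 - th) *: q).
Proof.
move=> cE p q th Ep Eq h0 h1.
have := cE p q (Itv01 h0 h1); rewrite !in_setE; move=> /(_ Ep Eq). done.
Qed.
Lemma finite_val (R : realType) (y : \bar R) : (-oo < y)%E -> (y < +oo)%E -> y = (fine y)%:E.
Proof. by case: y. Qed.
Lemma pair_conv (R : realType) n (y1 y2 : 'rV[R]_n) (a1 a2 th : R) :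
  th *: (y1, a1) + (1 - th) *: (y2, a2) = (th *: y1 + (1 - th) *: y2, th * a1 + (1 - th) * a2).
Proof. by []. Qed.

Unset Implicit Arguments.
Lemma F_lemma (R : realType) n (phi : 'rV[R]_n -> \bar R) (E : set ('rV[R]_n * R)) (xbar : 'rV[R]_n)
  m (U : 'M[R]_(m, n)) (delta : R) :
  (forall p q (th : R), E p -> E q -> 0 <= th -> th <= 1 -> E (th *: p + (1 - th) *: q)) ->
  (forall x, (-oo < phi x)%E) ->
  E `<=` epi phi -> epi phi `<=` closure E ->
  dom phi xbar -> 0 < delta -> eball xbar delta `&` aff (dom phi) `<=` dom phi ->
  (forall i, dom phi (row i U + xbar)) ->
  (forall x, dom phi x -> (x - xbar <= U)%MS) ->
  exists r, 0 < r /\ forall c : 'rV[R]_m, (forall i, `|c ord0 i| <= r) ->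
     exists a, E (xbar + c *m U, a).
Proof.
move=> cvx pinf Eepi epiE Dx d0 hri hU inU.
have ED : forall x a, E (x, a) -> dom phi x.
  move=> x a /Eepi; rewrite /epi /dom /= => h; exact: le_lt_trans h (ltry _).
pose P := pinvmx U.
pose KU := \sum_j \sum_i `|U i j|.
pose KP := \sum_i \sum_j `|P j i|.
have KU0 : 0 <= KU by apply: sumr_ge0 => j _; apply: sumr_ge0.
have KP0 : 0 <= KP by apply: sumr_ge0 => j _; apply: sumr_ge0.
pose r := delta / (4 * (KU + 1)).
have r0 : 0 < r by rewrite /r divr_gt0 // mulr_gt0 // ltr_wpDl.
exists r; split => // c hc.
apply: (@orthant R m n (fun y => exists a, E (y, a)) _ U).
  move=> y1 y2 th [a1 E1] [a2 E2] h0 h1; exists (th * a1 + (1 - th) * a2).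
  by rewrite -pair_conv; apply: cvx.
move=> sg.
pose ss : 'rV[R]_m := \row_i (if sg i then r else - r).
pose q := xbar + (c + ss) *m U.
have hcs : forall i, `|(c + ss) ord0 i| <= 2 * r.
  move=> i; rewrite !mxE; apply: le_trans (ler_normD _ _) _.
  have : `|(if sg i then r else - r)| = r by case: (sg i); rewrite ?normrN gtr0_norm.
  move=> ->; have := hc i; lra.
have Dq : dom phi q.
  apply: hri; split; last by apply: aff_comb.
  rewrite /eball /= /q (addrC xbar) addrK.
  apply: le_lt_trans (enorm_le _) _.
  apply: (@le_lt_trans _ _ (\sum_j (2 * r) * \sum_i `|U i j|)).
    by apply: ler_sum => j _; apply: mx_bound.
  rewrite -mulr_sumr -/KU /r.
  have -> : 2 * (delta / (4 * (KU + 1))) * KU = delta * (KU / (2 * (KU + 1))).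
    by field; rewrite ?mulf_neq0 // gt_eqF // ltr_wpDl.
  rewrite gtr_pMr // ltr_pdivrMr ?mulr_gt0 ?ltr_wpDl //; lra.
have fq : phi q = (fine (phi q))%:E by apply: finite_val.
have epq : epi phi (q, fine (phi q)) by rewrite /epi /= -fq.
pose e := r / (KP + 1).
have e0 : 0 < e by rewrite /e divr_gt0 // ltr_wpDl.
have [[y b] [Eyb [hy _]]] := closure_approx e0 (epiE _ epq).
have yqU : (y - q <= U)%MS.
  have -> : y - q = (y - xbar) - (c + ss) *m U by rewrite /q opprD addrA.
  by rewrite addmx_sub ?eqmx_opp ?submxMl // inU //; apply: ED Eyb.
exists (ss + (y - q) *m P); split.
  move=> i.
  have hw : `|((y - q) *m P) ord0 i| < r.
    apply: le_lt_trans (mx_bound _ _ _) _.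
      have esub : forall (u w : 'rV[R]_n) j, (u - w) ord0 j = u ord0 j - w ord0 j.
        by move=> u w j; rewrite !mxE.
      move=> j; rewrite esub distrC; exact: ltW (hy j).
    apply: (@le_lt_trans _ _ (e * KP)).
      apply: ler_wpM2l; first exact: ltW.
      have := @le_sum_single R m (fun i => \sum_j `|P j i|) i.
      by apply => k; apply: sumr_ge0.
    rewrite /e mulrAC ltr_pdivrMr ?ltr_wpDl // ltr_pM2l //; lra.
  move: hw; rewrite ltr_norml => /andP [hw1 hw2].
  rewrite mxE [ss ord0 i]mxE; case: (sg i); lra.
exists b.
rewrite mulmxDl mulmxKpV // /q mulmxDl.
by rewrite (addrA xbar) addrA addrCA subrr addr0.
Qed.

Lemma subgrad_exists (R : realType) n (phi : 'rV[R]_n -> \bar R) (xbar : 'rV[R]_n) :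
  proper_fun phi -> nearly_convex_fun phi -> ri (dom phi) xbar ->
  exists xi, forall x, ((dotv xi (x - xbar))%:E <= phi x - phi xbar)%E.
Proof.
move=> [_ pinf] [E [cvxE [Eepi epiE]]] [Dx [delta [d0 hri]]].
have cvx := cvx_form cvxE.
have fx : phi xbar = (fine (phi xbar))%:E by apply: finite_val.
set f0 := fine (phi xbar) in fx.
have ED : forall x a, E (x, a) -> dom phi x.
  move=> x a /Eepi; rewrite /epi /dom /= => h; exact: le_lt_trans h (ltry _).
have [m [U [hU hS]]] := span_exists (fun s => dom phi (s + xbar)).
have inU : forall x, dom phi x -> (x - xbar <= U)%MS.
  by move=> x Dx'; apply: hS; rewrite subrK.
have [r [r0 hF]] := @F_lemma R n phi E xbar m U delta cvx pinf Eepi epiE Dx d0 hri hU inU.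
have base : forall x a, E (x, a) -> x = xbar -> f0 <= a.
  by move=> x a /Eepi h ex; move: h; rewrite /epi /= ex fx lee_fin.
have dom' : forall x a, E (x, a) -> exists lam, 0 < lam /\ exists a', E (xbar - lam *: (x - xbar), a').
  move=> x a Ea.
  pose aa := (x - xbar) *m pinvmx U.
  have vU : aa *m U = x - xbar by rewrite mulmxKpV // inU //; apply: ED Ea.
  pose K := \sum_i `|aa ord0 i|.
  have K0 : 0 <= K by apply: sumr_ge0.
  pose lam := r / (1 + K).
  have lam0 : 0 < lam by rewrite /lam divr_gt0 // ltr_pwDl.
  exists lam; split => //.
  have [a' Ea'] : exists a', E (xbar + (- lam *: aa) *m U, a').
    apply: hF => i; rewrite mxE normrM normrN (gtr0_norm lam0) /lam.
    rewrite mulrAC ler_pdivrMr ?ltr_pwDl // ler_pM2l //.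
    have := @le_sum_single R m (fun i => `|aa ord0 i|) i.
    move=> /(_ (fun _ => normr_ge0 _)); rewrite -/K; lra.
  exists a'; by rewrite -scalemxAl vU scaleNr in Ea'.
have [xi hxi] := extension cvx base dom'.
exists xi => x.
case Ephi: (phi x) => [v| |]; last first.
- by have := pinf x; rewrite Ephi.
- by rewrite fx /= leey.
rewrite fx -EFinB lee_fin.
have cl : closure E (x, v) by apply: epiE; rewrite /epi /= Ephi.
apply/ler_addgt0Pr => e e0.
pose K := \sum_j `|xi ord0 j|.
have K0 : 0 <= K by apply: sumr_ge0.
pose e' := e / (K + 1).
have e'0 : 0 < e' by rewrite /e' divr_gt0 // ltr_wpDl.
have [[y b] [Eyb [hy hb]]] := closure_approx e'0 cl.
have h1 := hxi _ _ Eyb.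
have h2 : `|dotv xi (x - y)| <= e' * K.
  apply: dotv_bound => j.
  have -> : (x - y) ord0 j = x ord0 j - y ord0 j by rewrite !mxE.
  exact: ltW (hy j).
have -> : x - xbar = (y - xbar) + (x - y) by rewrite [RHS]addrC addrA subrK.
rewrite dotvD.
have hb' : b <= v + e' by move: hb; rewrite /= distrC ltr_norml => /andP []; lra.
have : e' * K + e' = e by rewrite /e'; field; rewrite gt_eqF // ltr_wpDl.
move: h2; rewrite ler_norml => /andP [_ h2].
lra.
Qed.

Theorem mainTheorem2 (R : realType) (n : nat) (phi : 'rV[R]_n -> \bar R)
  (eps : R) (xbar : 'rV[R]_n) :
  proper_fun phi -> nearly_convex_fun phi -> 0 <= eps ->
  ri (dom phi) xbar ->
  [/\ esubdiff phi eps xbar !=set0,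
      closed (esubdiff phi eps xbar),
      convex_set (esubdiff phi eps xbar)
    & subdiff phi xbar = \bigcap_(e in [set e : R | 0 < e]) esubdiff phi e xbar].
Proof.
move=> hp hnc heps hri.
have [xi hxi] := @subgrad_exists R n phi xbar hp hnc hri.
have pinf := hp.2.
have fx : phi xbar = (fine (phi xbar))%:E by apply: finite_val => //; case: hri.
set f0 := fine (phi xbar) in fx.
have red : forall (d : R) x, (forall v, phi x = v%:E -> d <= v - f0) -> (d%:E <= phi x - phi xbar)%E.
  move=> d x h; case Ephi: (phi x) => [v| |].
  - by rewrite fx -EFinB lee_fin; apply: h.
  - by rewrite fx /= leey.
  - by have := pinf x; rewrite Ephi.
have red' : forall (d : R) x, (d%:E <= phi x - phi xbar)%E -> forall v, phi x = v%:E -> d <= v - f0.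
  by move=> d x + v Ev; rewrite Ev fx -EFinB lee_fin.
split.
- exists xi => x; apply: le_trans (hxi x); rewrite lee_fin; lra.
- apply/closure_id; rewrite eqEsubset; split; first exact: subset_closure.
  move=> z cz x; apply: red => v Ev.
  apply/ler_addgt0Pr => e e0.
  pose K := \sum_j `|(x - xbar) ord0 j|.
  have K0 : 0 <= K by apply: sumr_ge0.
  pose e' := e / (K + 1).
  have e'0 : 0 < e' by rewrite /e' divr_gt0 // ltr_wpDl.
  have [z' [Az' hz']] := closure_approx1 e'0 cz.
  have h1 := red' _ _ (Az' x) v Ev.
  have h2 : `|dotv (x - xbar) (z - z')| <= e' * K.
    apply: dotv_bound => j.
    have -> : (z - z') ord0 j = z ord0 j - z' ord0 j by rewrite !mxE.
    exact: ltW (hz' j).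
  have -> : z = z' + (z - z') by rewrite addrC subrK.
  rewrite dotvC dotvD dotvC [dotv (x - xbar) (z - z')]dotvC.
  have : e' * K <= e.
    rewrite /e' mulrAC ler_pdivrMr ?ltr_wpDl //; nra.
  move: h2; rewrite ler_norml dotvC => /andP [_ h2].
  lra.
- move=> z1 z2 l; rewrite !in_setE => h1 h2 x.
  have -> : (z1 <| l |> z2 : 'rV[R]_n) = l%:num *: z1 + (1 - l%:num) *: z2 by [].
  apply: red => v Ev.
  have k1 := red' _ _ (h1 x) v Ev.
  have k2 := red' _ _ (h2 x) v Ev.
  rewrite dotvC dotvD !dotvZ dotvC [dotv (x - xbar) z2]dotvC.
  have l0 : 0 <= l%:num by apply: ge0.
  have l1 : l%:num <= 1 by apply: le1.
  nra.
- apply/seteqP; split.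
  + move=> z hz e /= e0 x; apply: red => v Ev.
    have := red' _ _ (hz x) v Ev; lra.
  + move=> z hz x; apply: red => v Ev.
    apply/ler_addgt0Pr => e e0.
    have := red' _ _ (hz e e0 x) v Ev; lra.
Qed.
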